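(* Let $\varepsilon>0$ be sufficiently small, $n$ a positive integer, $v$ a binary string, and $r_1>r_2>\dots>r_k$ positive integers with $r_j\ge r_{j+1}/\varepsilon^4$ for all $j$, such that $l_j=\varepsilon^2r_j$ are integers, $l_1\mid |v|$, $l_{j+1}\mid l_j$, and $\mathrm{adv}(v,A_{r_j,n})\ge\varepsilon/2$ for every $j=1,\dots,k$. Let $v_0=v$ and for $j=1,\dots,k$ let $v_j$ be chosen uniformly at random among the consecutive non-overlapping length-$l_j$ substrings into which $v_{j-1}$ is split, and let $B_j=\mathrm{bias}(v_j)$. Then $\mathrm{Var}(B_{i+1})\ge\mathrm{Var}(B_i)+\frac{\varepsilon^3}{1200}$ for all $1\le i<k$.
   Context: For a binary string $w$, $\mathrm{bias}(w)=\frac{\mathrm{count}_1(w)-\mathrm{count}_0(w)}{|w|}$, where $\mathrm{count}_a(w)$ is the number of occurrences of symbol $a$ in $w$. A matching $M$ between strings $a,b$ is a pair of increasing index sequences in $a$ and $b$ of equal length $|M|$ matching equal symbols; $\mathrm{adv}_M(a,b)=\frac{3|M|-|a|-|b|}{|a|}$ and $\mathrm{adv}(a,b)=\max_M\mathrm{adv}_M(a,b)$. $A_{r,n}$ is the length-$n$ prefix of $(0^r1^r)^\infty$. *)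

(* Defs.v *)
From Stdlib Require Import Reals Lra Lia List Arith Bool Sorted.
Import ListNotations.
Open Scope R_scope.

Definition count1 (w : list bool) : nat := length (filter (fun b => b) w).
Definition count0 (w : list bool) : nat := length (filter negb w).

Definition bias (w : list bool) : R :=
  (INR (count1 w) - INR (count0 w)) / INR (length w).

Fixpoint sublists {A : Type} (l : list A) : list (list A) :=
  match l with
  | [] => [[]]
  | x :: xs => let s := sublists xs in map (cons x) s ++ s
  end.

Definition is_matching (a b : list bool) (I J : list nat) : Prop :=
  StronglySorted lt I /\ StronglySorted lt J /\
  Forall (fun i => (i < length a)%nat) I /\ Forall (fun j => (j < length b)%nat) J /\
  length I = length J /\
  Forall (fun p => nth (fst p) a false = nth (snd p) b false) (combine I J).

Definition matchingb (a b : list bool) (M : list nat * list nat) : bool :=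
  Nat.eqb (length (fst M)) (length (snd M)) &&
  forallb (fun p => Bool.eqb (nth (fst p) a false) (nth (snd p) b false))
          (combine (fst M) (snd M)).

(* all matchings between a and b: increasing index sequences are exactly the
   subsequences of [0; ...; |a|-1] (resp. |b|) *)
Definition matchings (a b : list bool) : list (list nat * list nat) :=
  filter (matchingb a b)
    (list_prod (sublists (seq 0 (length a))) (sublists (seq 0 (length b)))).

Definition adv_M (a b : list bool) (M : list nat * list nat) : R :=
  (3 * INR (length (fst M)) - INR (length a) - INR (length b)) / INR (length a).

(* adv(a,b) = max over all matchings M of adv_M(a,b); the empty matching
   always exists, so it serves as the initial value of the maximum. *)
Definition adv (a b : list bool) : R :=
  fold_right Rmax (adv_M a b ([], [])) (map (adv_M a b) (matchings a b)).

(* A_{r,n}: the length-n prefix of (0^r 1^r)^infinity; position i holds 1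
   iff floor(i / r) is odd. *)
Definition A (r n : nat) : list bool := map (fun i => Nat.odd (i / r)) (seq 0 n).

Definition blocks (l : nat) (w : list bool) : list (list bool) :=
  map (fun i => firstn l (skipn (i * l) w)) (seq 0 (length w / l)).

Definition average (xs : list R) : R := fold_right Rplus 0 xs / INR (length xs).

(* Expectation of g(v_m) for the random process v_0 = w and v_j a uniformly
   random block of length ls_j of v_{j-1}, where ls = [l_1; ...; l_m]. *)
Fixpoint Exp (ls : list nat) (w : list bool) (g : list bool -> R) : R :=
  match ls with
  | [] => g w
  | l :: ls' => average (map (fun u => Exp ls' u g) (blocks l w))
  end.

Definition levels (l : nat -> nat) (i : nat) : list nat := map l (seq 1 i).

Definition VarB (l : nat -> nat) (v : list bool) (i : nat) : R :=
  Exp (levels l i) v (fun w => bias w ^ 2) - (Exp (levels l i) v bias) ^ 2.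

(* Main.v *)
Require Import Defs.
From Stdlib Require Import Reals List Arith Lia Lra Bool.
Import ListNotations.
Open Scope R_scope.

Lemma count1_app x y : count1 (x ++ y) = (count1 x + count1 y)%nat.
Proof. unfold count1. now rewrite filter_app, length_app. Qed.
Lemma count0_app x y : count0 (x ++ y) = (count0 x + count0 y)%nat.
Proof. unfold count0. now rewrite filter_app, length_app. Qed.
Lemma count10 x : (count1 x + count0 x)%nat = length x.
Proof. induction x as [|a x IH]; [reflexivity|]. unfold count1, count0 in *; destruct a; simpl; lia. Qed.

Inductive subseq {T : Type} : list T -> list T -> Prop :=
| ss_nil : subseq [] []
| ss_skip x s t : subseq s t -> subseq s (x :: t)
| ss_take x s t : subseq s t -> subseq (x :: s) (x :: t).

Lemma subseq_nil_l {T} (t : list T) : subseq [] t.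
Proof. induction t; constructor; auto. Qed.

Lemma subseq_nil_r {T} (s : list T) : subseq s [] -> s = [].
Proof. intro H; inversion H; auto. Qed.

Lemma subseq_app_inv_r {T} (c x y : list T) : subseq c (x ++ y) ->
  exists c1 c2, c = c1 ++ c2 /\ subseq c1 x /\ subseq c2 y.
Proof.
  revert c; induction x as [|a x IH]; intros c H; simpl in *.
  - exists [], c; repeat split; auto; constructor.
  - inversion H as [|? ? ? H2|? ? ? H2]; subst.
    + destruct (IH _ H2) as (c1 & c2 & -> & H1 & H3). exists c1, c2; repeat split; auto. now constructor.
    + destruct (IH _ H2) as (c1 & c2 & -> & H1 & H3). exists (a :: c1), c2; repeat split; auto. now constructor.
Qed.

Lemma subseq_app_inv_l_aux {T} (c X : list T) : subseq c X -> forall c1 c2, c = c1 ++ c2 ->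
  exists X1 X2, X = X1 ++ X2 /\ subseq c1 X1 /\ subseq c2 X2.
Proof.
  induction 1 as [|x s t H IH|x s t H IH]; intros c1 c2 E.
  - destruct c1, c2; try discriminate. exists [], []; repeat split; constructor.
  - destruct (IH _ _ E) as (X1 & X2 & -> & H1 & H2). exists (x :: X1), X2; repeat split; auto. now constructor.
  - destruct c1 as [|b c1]; simpl in E.
    + subst c2. exists [], (x :: t); repeat split; auto; [constructor|now constructor].
    + injection E as <- E. destruct (IH _ _ E) as (X1 & X2 & -> & H1 & H2).
      exists (x :: X1), X2; repeat split; auto. now constructor.
Qed.

Lemma subseq_app_inv_l {T} (c1 c2 X : list T) : subseq (c1 ++ c2) X ->
  exists X1 X2, X = X1 ++ X2 /\ subseq c1 X1 /\ subseq c2 X2.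
Proof. intro H; eapply subseq_app_inv_l_aux; eauto. Qed.

Lemma subseq_length {T} (s t : list T) : subseq s t -> (length s <= length t)%nat.
Proof. induction 1; simpl; lia. Qed.
Lemma subseq_count1 s t : subseq s t -> (count1 s <= count1 t)%nat.
Proof. unfold count1; induction 1; simpl; try destruct x; simpl; lia. Qed.
Lemma subseq_count0 s t : subseq s t -> (count0 s <= count0 t)%nat.
Proof. unfold count0; induction 1; simpl; try destruct x; simpl; lia. Qed.

Lemma blocks_gen (l : nat) : (0 < l)%nat -> forall q (w : list bool), length w = (q * l)%nat ->
  Forall (fun u => length u = l) (map (fun i => firstn l (skipn (i * l) w)) (seq 0 q)) /\
  concat (map (fun i => firstn l (skipn (i * l) w)) (seq 0 q)) = w.
Proof.
  intros Hl q; induction q as [|q IH]; intros w Hw.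
  - simpl in *. destruct w; [|discriminate]. split; [constructor|reflexivity].
  - destruct (IH (skipn l w)) as [H1 H2]. { rewrite length_skipn. lia. }
    simpl. rewrite <- seq_shift, map_map.
    replace (map (fun x => firstn l (skipn (S x * l) w)) (seq 0 q))
      with (map (fun i => firstn l (skipn (i * l) (skipn l w))) (seq 0 q)).
    2:{ apply map_ext; intro i. rewrite skipn_skipn. f_equal. f_equal. lia. }
    split.
    + constructor; auto. rewrite length_firstn. lia.
    + simpl. rewrite H2. apply firstn_skipn.
Qed.

Lemma blocks_props l w : (0 < l)%nat -> Nat.divide l (length w) ->
  Forall (fun u => length u = l) (blocks l w) /\ concat (blocks l w) = w /\
  length (blocks l w) = (length w / l)%nat.
Proof.
  intros Hl [q Hq]. unfold blocks.
  replace (length w / l)%nat with q by (rewrite Hq; rewrite Nat.div_mul; lia).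
  destruct (blocks_gen l Hl q w Hq). repeat split; auto. now rewrite length_map, length_seq.
Qed.

Definition sumR (xs : list R) : R := fold_right Rplus 0 xs.

Lemma sumR_app a b : sumR (a ++ b) = sumR a + sumR b.
Proof. induction a; simpl; [ring|]. unfold sumR in *; simpl; rewrite IHa; ring. Qed.

Lemma sumR_concat {T} (h : T -> R) (L : list (list T)) :
  sumR (map h (concat L)) = sumR (map (fun y => sumR (map h y)) L).
Proof. induction L; simpl; auto. rewrite map_app, sumR_app, IHL. reflexivity. Qed.

Lemma sumR_scal {T} (f : T -> R) (a : R) xs : sumR (map (fun x => f x * a) xs) = sumR (map f xs) * a.
Proof. induction xs; simpl; [ring|]. unfold sumR in *; simpl; rewrite IHxs; ring. Qed.

Lemma sumR_plus {T} (f g : T -> R) xs : sumR (map (fun x => f x + g x) xs) = sumR (map f xs) + sumR (map g xs).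
Proof. induction xs; simpl; [ring|]. unfold sumR in *; simpl; rewrite IHxs; ring. Qed.

Lemma sumR_const {T} (a : R) (xs : list T) : sumR (map (fun _ => a) xs) = INR (length xs) * a.
Proof. induction xs; [simpl; ring|]. change (length (a0 :: xs)) with (S (length xs)). rewrite S_INR. unfold sumR in *; simpl map; simpl fold_right. rewrite IHxs; ring. Qed.

Lemma sumR_ext {T} (f g : T -> R) xs : (forall x, In x xs -> f x = g x) -> sumR (map f xs) = sumR (map g xs).
Proof. intro H; f_equal; apply map_ext_in; auto. Qed.

Lemma sumR_le {T} (f g : T -> R) xs : (forall x, In x xs -> f x <= g x) -> sumR (map f xs) <= sumR (map g xs).
Proof. induction xs; simpl; intros H; [lra|]. unfold sumR in *; simpl.
  specialize (IHxs (fun x Hx => H x (or_intror Hx))). specialize (H a (or_introl eq_refl)). lra. Qed.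

Lemma average_def xs : average xs = sumR xs / INR (length xs).
Proof. reflexivity. Qed.

Lemma length_concat_const {T U} (f : T -> list U) xs c :
  (forall x, In x xs -> length (f x) = c) -> length (concat (map f xs)) = (length xs * c)%nat.
Proof. induction xs; simpl; intros H; auto. rewrite length_app, IHxs, H; auto. Qed.

Lemma avg_concat {T U} (f : T -> list U) (h : U -> R) xs c :
  (forall x, In x xs -> length (f x) = c) ->
  average (map (fun x => average (map h (f x))) xs) = average (map h (concat (map f xs))).
Proof.
  intro H. rewrite !average_def, !length_map, (length_concat_const f xs c H), sumR_concat, map_map.
  rewrite (sumR_ext (fun x => average (map h (f x))) (fun x => sumR (map h (f x)) * / INR c)).
  2:{ intros x Hx. rewrite average_def, length_map, H; auto. }
  rewrite sumR_scal. rewrite mult_INR. unfold Rdiv. rewrite Rinv_mult. ring.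
Qed.

Fixpoint blocksN (ls : list nat) (w : list bool) : list (list bool) :=
  match ls with [] => [w] | l :: ls' => concat (map (blocksN ls') (blocks l w)) end.
Fixpoint chain (m : nat) (ls : list nat) : Prop :=
  match ls with [] => True | l :: ls' => (0 < l)%nat /\ Nat.divide l m /\ chain l ls' end.
Fixpoint lastl (m : nat) (ls : list nat) : nat :=
  match ls with [] => m | l :: ls' => lastl l ls' end.
Fixpoint cntN (m : nat) (ls : list nat) : nat :=
  match ls with [] => 1%nat | l :: ls' => (m / l * cntN l ls')%nat end.

Lemma concat_concat_map {T U} (f : T -> list (list U)) xs :
  concat (concat (map f xs)) = concat (map (fun x => concat (f x)) xs).
Proof. induction xs; simpl; auto. rewrite concat_app, IHxs. reflexivity. Qed.

Lemma blocksN_props ls : forall w, chain (length w) ls ->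
  length (blocksN ls w) = cntN (length w) ls /\
  Forall (fun B => length B = lastl (length w) ls) (blocksN ls w) /\
  concat (blocksN ls w) = w.
Proof.
  induction ls as [|l ls IH]; intros w Hc.
  - simpl. repeat split; auto. now rewrite app_nil_r.
  - destruct Hc as (Hl & Hd & Hc). destruct (blocks_props l w Hl Hd) as (HF & Hcat & Hlen).
    rewrite Forall_forall in HF.
    assert (HI : forall u, In u (blocks l w) -> length (blocksN ls u) = cntN l ls /\
       Forall (fun B => length B = lastl l ls) (blocksN ls u) /\ concat (blocksN ls u) = u).
    { intros u Hu. rewrite <- (HF u Hu). apply IH. rewrite (HF u Hu). auto. }
    change (blocksN (l :: ls) w) with (concat (map (blocksN ls) (blocks l w))). cbn [lastl cntN]. repeat split.
    + rewrite (length_concat_const _ _ (cntN l ls)); [|intros u Hu; apply HI; auto]. now rewrite Hlen.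
    + apply Forall_forall. intros B HB. apply in_concat in HB. destruct HB as (y & Hy & HB).
      apply in_map_iff in Hy. destruct Hy as (u & <- & Hu). destruct (HI u Hu) as (_ & H2 & _).
      rewrite Forall_forall in H2. auto.
    + rewrite concat_concat_map. transitivity (concat (map (fun x => x) (blocks l w))); [|rewrite map_id; exact Hcat]. f_equal. apply map_ext_in. intros u Hu. apply HI; auto.
Qed.

Lemma Exp_flat ls : forall w h, chain (length w) ls -> Exp ls w h = average (map h (blocksN ls w)).
Proof.
  induction ls as [|l ls IH]; intros w h Hc.
  - simpl. unfold average. simpl. unfold Rdiv. rewrite Rinv_1. ring.
  - destruct Hc as (Hl & Hd & Hc). destruct (blocks_props l w Hl Hd) as (HF & Hcat & Hlen).
    rewrite Forall_forall in HF.
    change (blocksN (l :: ls) w) with (concat (map (blocksN ls) (blocks l w))). cbn [Exp].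
    rewrite <- (avg_concat _ h _ (cntN l ls)).
    + f_equal. apply map_ext_in. intros u Hu. apply IH. rewrite HF; auto.
    + intros u Hu. rewrite <- (HF u Hu). apply blocksN_props. rewrite HF; auto.
Qed.

Lemma Exp_app ls : forall w l' g, Exp (ls ++ [l']) w g = Exp ls w (fun x => average (map g (blocks l' x))).
Proof.
  induction ls as [|l ls IH]; intros w l' g; simpl.
  - reflexivity.
  - f_equal. apply map_ext. intro u. apply IH.
Qed.

Lemma count1_snoc x b : count1 (x ++ [b]) = (count1 x + (if b then 1 else 0))%nat.
Proof. rewrite count1_app. destruct b; reflexivity. Qed.
Lemma count0_snoc x b : count0 (x ++ [b]) = (count0 x + (if b then 0 else 1))%nat.
Proof. rewrite count0_app. destruct b; reflexivity. Qed.

Lemma A_snoc r m : A r (S m) = A r m ++ [Nat.odd (m / r)].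
Proof. unfold A. rewrite seq_S, map_app. reflexivity. Qed.

Lemma A_diff r : (0 < r)%nat -> forall m,
  if Nat.even (m / r) then count0 (A r m) = (count1 (A r m) + m mod r)%nat
  else (count0 (A r m) + m mod r = count1 (A r m) + r)%nat.
Proof.
  intros Hr m; induction m as [|m IH].
  - rewrite Nat.div_0_l, Nat.mod_0_l by lia. reflexivity.
  - rewrite A_snoc, count1_snoc, count0_snoc.
    pose proof (Nat.div_mod_eq m r) as Hm. pose proof (Nat.mod_upper_bound m r ltac:(lia)) as Hs.
    set (q := (m / r)%nat) in *. set (s := (m mod r)%nat) in *.
    unfold Nat.odd.
    destruct (Nat.lt_ge_cases (S s) r) as [Hlt|Hge].
    + assert (Hq : (S m / r)%nat = q) by (symmetry; apply (Nat.div_unique _ _ _ (S s)); lia).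
      assert (Hs' : (S m mod r)%nat = S s) by (symmetry; apply (Nat.mod_unique _ _ q); lia).
      rewrite Hq, Hs'. destruct (Nat.even q); simpl; lia.
    + assert (Hq : (S m / r)%nat = S q) by (symmetry; apply (Nat.div_unique _ _ _ 0); lia).
      assert (Hs' : (S m mod r)%nat = 0%nat) by (symmetry; apply (Nat.mod_unique _ _ (S q)); lia).
      rewrite Hq, Hs', Nat.even_succ. unfold Nat.odd. destruct (Nat.even q); simpl; lia.
Qed.

Lemma A_bal r m : (0 < r)%nat -> (count1 (A r m) <= count0 (A r m) <= count1 (A r m) + r)%nat.
Proof.
  intro Hr. pose proof (A_diff r Hr m). pose proof (Nat.mod_upper_bound m r ltac:(lia)).
  destruct (Nat.even (m / r)); lia.
Qed.

Lemma length_A r n : length (A r n) = n.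
Proof. unfold A. now rewrite length_map, length_seq. Qed.

Lemma A_prefix r n P Z : P ++ Z = A r n -> P = A r (length P).
Proof.
  intro E. assert (Hle : (length P <= n)%nat) by (rewrite <- (length_A r n), <- E, length_app; lia).
  assert (HP : P = firstn (length P) (A r n)) by (rewrite <- E, firstn_app, Nat.sub_diag, firstn_all; simpl; now rewrite app_nil_r).
  rewrite HP at 1. unfold A. rewrite firstn_map. f_equal.
  replace n with (length P + (n - length P))%nat at 1 by lia.
  rewrite seq_app, firstn_app. rewrite length_seq, Nat.sub_diag. simpl.
  rewrite app_nil_r. apply firstn_all2. rewrite length_seq; lia.
Qed.

Lemma A_infix r n P X Y : (0 < r)%nat -> P ++ X ++ Y = A r n ->
  (count1 X <= count0 X + r /\ count0 X <= count1 X + r)%nat.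
Proof.
  intros Hr E.
  pose proof (A_prefix r n P (X ++ Y) E) as H1.
  assert (E2 : (P ++ X) ++ Y = A r n) by (now rewrite <- app_assoc).
  pose proof (A_prefix r n (P ++ X) Y E2) as H2.
  pose proof (A_bal r (length P) Hr). pose proof (A_bal r (length (P ++ X)) Hr).
  rewrite <- H1 in *. rewrite <- H2 in *. rewrite count1_app, count0_app in *. lia.
Qed.

Fixpoint nb (w : list bool) : nat :=
  match w with
  | x :: ((y :: _) as t) => ((if Bool.eqb x y then 0 else 1) + nb t)%nat
  | _ => 0%nat
  end.

Lemma nb_app x y : (nb x + nb y <= nb (x ++ y))%nat.
Proof.
  induction x as [|a x IH]; simpl; [lia|].
  destruct x as [|b x]; simpl.
  - destruct y; simpl; lia.
  - simpl in IH. lia.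
Qed.

Lemma nb_snoc x b d : x <> [] -> nb (x ++ [b]) = (nb x + (if Bool.eqb (last x d) b then 0 else 1))%nat.
Proof.
  induction x as [|a x IH]; intro Hx; [congruence|].
  destruct x as [|c x]; [simpl; lia|].
  change ((a :: c :: x) ++ [b]) with (a :: ((c :: x) ++ [b])).
  change (nb (a :: (c :: x) ++ [b])) with ((if Bool.eqb a c then 0 else 1) + nb ((c :: x) ++ [b]))%nat.
  rewrite IH by discriminate. simpl. destruct x; simpl; lia.
Qed.

Lemma nb_both X : (0 < count1 X)%nat -> (0 < count0 X)%nat -> (1 <= nb X)%nat.
Proof.
  induction X as [|a X IH]; [unfold count1; simpl; lia|].
  destruct X as [|b X].
  - unfold count1, count0; destruct a; simpl; lia.
  - intros H1 H0. simpl. destruct (Bool.eqb a b) eqn:E.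
    + apply Bool.eqb_prop in E. subst b. simpl in IH.
      unfold count1, count0 in *. destruct a; simpl in *; apply IH; lia.
    + lia.
Qed.

Lemma nb_A r : (0 < r)%nat -> forall m, (nb (A r (S m)) * r <= m)%nat.
Proof.
  intros Hr m; induction m as [|m IH].
  - unfold A; simpl. lia.
  - rewrite (A_snoc r (S m)). rewrite (nb_snoc _ _ false).
    2:{ intro H. apply (f_equal (@length bool)) in H. rewrite length_A in H. discriminate. }
    assert (Hlast : last (A r (S m)) false = Nat.odd (m / r)) by (rewrite A_snoc; apply last_last).
    rewrite Hlast.
    pose proof (Nat.div_mod_eq m r) as Hm. pose proof (Nat.mod_upper_bound m r ltac:(lia)) as Hs.
    set (q := (m / r)%nat) in *. set (s := (m mod r)%nat) in *.
    destruct (Nat.lt_ge_cases (S s) r) as [Hlt|Hge].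
    + assert (Hq : (S m / r)%nat = q) by (symmetry; apply (Nat.div_unique _ _ _ (S s)); lia).
      rewrite Hq, Bool.eqb_reflx. rewrite Nat.add_0_r. lia.
    + assert (Hb : (nb (A r (S m)) <= q)%nat).
      { destruct (Nat.le_gt_cases (nb (A r (S m))) q) as [h|h]; [exact h|].
        pose proof (Nat.mul_le_mono_r (S q) (nb (A r (S m))) r h). lia. }
      pose proof (Nat.mul_le_mono_r _ _ r Hb).
      destruct (Bool.eqb _ _); lia.
Qed.

Definition cf (p : R) : R := if Rle_dec p (1/3) then -1 else 2 - / p.

Lemma cf_bounds p : 0 <= p <= 1 -> -1 <= cf p <= 1.
Proof.
  intro Hp. unfold cf. destruct (Rle_dec p (1/3)); [lra|].
  assert (H1 : 1 <= / p) by (rewrite <- Rinv_1; apply Rinv_le_contravar; lra).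
  assert (H2 : / p < 3) by (replace 3 with (/ (1/3)) by field; apply Rinv_lt_contravar; nra).
  lra.
Qed.

Lemma cf_sum p : 0 <= p <= 1 -> cf p + cf (1 - p) <= 0.
Proof.
  intro Hp. unfold cf.
  destruct (Rle_dec p (1/3)) as [h1|h1]; destruct (Rle_dec (1-p) (1/3)) as [h2|h2].
  - lra.
  - assert (/ (1-p) >= 1) by (rewrite <- Rinv_1; apply Rle_ge, Rinv_le_contravar; lra). lra.
  - assert (/ p >= 1) by (rewrite <- Rinv_1; apply Rle_ge, Rinv_le_contravar; lra). lra.
  - assert (Hp0 : 0 < p) by lra. assert (Hq0 : 0 < 1 - p) by lra.
    assert (E : / p + / (1 - p) = / (p * (1 - p))) by (field; lra).
    assert (H4 : p * (1 - p) <= 1/4) by (pose proof (Rle_0_sqr (2*p-1)); unfold Rsqr in *; nra).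
    assert (/ (p * (1-p)) >= 4) by (replace 4 with (/ (1/4)) by field; apply Rle_ge, Rinv_le_contravar; nra).
    lra.
Qed.

Lemma cf_main p m q l e : 0 <= p <= 1 -> 0 <= m -> m <= q -> 0 <= l -> m <= p * l + e ->
  3 * m - l - q <= cf p * q + 3 * Rabs e.
Proof.
  intros Hp Hm Hmq Hl He. pose proof (Rle_abs e). pose proof (Rabs_pos e). unfold cf.
  destruct (Rle_dec p (1/3)) as [h|h].
  - assert (p * l <= l / 3) by nra. lra.
  - set (lam := / (3 * p)).
    assert (Hl1 : lam * (3 * p) = 1) by (unfold lam; field; lra).
    assert (Hl0 : 0 < lam) by (unfold lam; apply Rinv_0_lt_compat; lra).
    assert (Hlt : lam <= 1) by (unfold lam; rewrite <- Rinv_1; apply Rinv_le_contravar; lra).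
    assert (Hip : / p = 3 * lam) by (unfold lam; field; lra).
    rewrite Hip.
    assert (A1 : lam * (3 * m - l - q) <= lam * (3 * (p * l) + 3 * e - l - q)) by (apply Rmult_le_compat_l; lra).
    assert (A2 : (1 - lam) * (3 * m - l - q) <= (1 - lam) * (2 * q - l)) by (apply Rmult_le_compat_l; lra).
    assert (A3 : lam * e <= Rabs e) by nra.
    nra.
Qed.

Lemma INR_len X : INR (length X) = INR (count1 X) + INR (count0 X).
Proof. rewrite <- plus_INR, count10. reflexivity. Qed.

Lemma piece p u X cu : 0 <= p <= 1 -> subseq cu u -> subseq cu X ->
  3 * INR (length cu) - INR (length u) - INR (length X) <=
  cf p * INR (count1 X) + cf (1 - p) * INR (count0 X)
  + 3 * Rabs (INR (count1 u) - p * INR (length u)) + 2 * INR (length u) * INR (nb X).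
Proof.
  intros Hp Hu HX.
  pose proof (subseq_count1 _ _ Hu). pose proof (subseq_count0 _ _ Hu).
  pose proof (subseq_count1 _ _ HX). pose proof (subseq_count0 _ _ HX).
  pose proof (subseq_length _ _ Hu). pose proof (count10 cu) as Ecu. pose proof (count10 u) as Eu.
  pose proof (pos_INR (nb X)) as Hnb. pose proof (pos_INR (length u)) as Hlu.
  pose proof (cf_bounds p Hp). pose proof (cf_bounds (1-p) ltac:(lra)).
  rewrite (INR_len X).
  pose proof (pos_INR (count1 X)). pose proof (pos_INR (count0 X)).
  pose proof (Rabs_pos (INR (count1 u) - p * INR (length u))).
  destruct (Nat.eq_0_gt_0_cases (count0 X)) as [h0|h0].
  - assert (Hc : length cu = count1 cu) by lia.
    rewrite h0. simpl INR.
    assert (Hm : INR (length cu) <= p * INR (length u) + (INR (count1 u) - p * INR (length u))).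
    { rewrite Hc. ring_simplify. apply le_INR. lia. }
    assert (Hq : INR (length cu) <= INR (count1 X)) by (apply le_INR; lia).
    pose proof (cf_main p _ _ _ _ Hp (pos_INR _) Hq Hlu Hm).
    assert (0 <= 2 * INR (length u) * INR (nb X)) by nra. nra.
  - destruct (Nat.eq_0_gt_0_cases (count1 X)) as [h1|h1].
    + assert (Hc : length cu = count0 cu) by lia.
      rewrite h1. simpl INR.
      assert (Hm : INR (length cu) <= (1 - p) * INR (length u) + (p * INR (length u) - INR (count1 u))).
      { rewrite Hc. assert (INR (count0 cu) <= INR (count0 u)) by (apply le_INR; lia).
        rewrite (INR_len u) in *. lra. }
      assert (Hq : INR (length cu) <= INR (count0 X)) by (apply le_INR; lia).
      pose proof (cf_main (1-p) _ _ _ _ ltac:(lra) (pos_INR _) Hq Hlu Hm) as Hmain.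
      rewrite Rabs_minus_sym in Hmain.
      assert (0 <= 2 * INR (length u) * INR (nb X)) by nra. nra.
    + assert (Hnb1 : 1 <= INR (nb X)) by (apply (le_INR 1); apply nb_both; auto).
      assert (INR (length cu) <= INR (length u)) by (apply le_INR; lia).
      assert (cf p * INR (count1 X) >= - INR (count1 X)) by nra.
      assert (cf (1-p) * INR (count0 X) >= - INR (count0 X)) by nra.
      nra.
Qed.

Lemma perB p l us : forall cB XB, 0 <= p <= 1 -> Forall (fun u => length u = l) us ->
  subseq cB (concat us) -> subseq cB XB ->
  3 * INR (length cB) - INR (length (concat us)) - INR (length XB) <=
  cf p * INR (count1 XB) + cf (1 - p) * INR (count0 XB)
  + sumR (map (fun u => 3 * Rabs (INR (count1 u) - p * INR l)) us) + 2 * INR l * INR (nb XB).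
Proof.
  pose proof (pos_INR l) as Hl.
  induction us as [|u us IH]; intros cB XB Hp HF H1 H2.
  - simpl in H1. apply subseq_nil_r in H1. subst cB. simpl.
    pose proof (cf_bounds p Hp). pose proof (cf_bounds (1-p) ltac:(lra)).
    rewrite (INR_len XB). pose proof (pos_INR (count1 XB)). pose proof (pos_INR (count0 XB)).
    pose proof (pos_INR (nb XB)). unfold sumR; simpl. nra.
  - pose proof (Forall_inv HF) as Hu; pose proof (Forall_inv_tail HF) as HF'; simpl in Hu.
    simpl concat in H1. destruct (subseq_app_inv_r _ _ _ H1) as (c1 & c2 & -> & Hc1 & Hc2).
    destruct (subseq_app_inv_l _ _ _ H2) as (X1 & X2 & -> & HX1 & HX2).
    pose proof (piece p u X1 c1 Hp Hc1 HX1) as Hpc.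
    pose proof (IH c2 X2 Hp HF' Hc2 HX2) as HI.
    pose proof (nb_app X1 X2) as Hnb. apply le_INR in Hnb. rewrite plus_INR in Hnb.
    simpl concat. rewrite !length_app, !plus_INR, !count1_app, !count0_app, !plus_INR.
    simpl map. unfold sumR at 1; simpl fold_right. change (fold_right Rplus 0 ?x) with (sumR x).
    rewrite Hu in Hpc |- *.
    assert (2*INR l * INR (nb X1) + 2*INR l*INR(nb X2) <= 2*INR l*INR(nb (X1++X2))) by nra.
    lra.
Qed.

Lemma weighted c1 c0 o z r : c1 + c0 <= 0 -> -1 <= c1 <= 1 -> -1 <= c0 <= 1 -> 0 <= o -> 0 <= z ->
  o <= z + r -> z <= o + r -> c1 * o + c0 * z <= r.
Proof.
  intros. destruct (Rle_dec z o).
  - assert (c1 * o + c0 * z = c1 * (o - z) + (c1 + c0) * z) by ring. nra.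
  - assert (c1 * o + c0 * z = c0 * (z - o) + (c1 + c0) * o) by ring. nra.
Qed.

Definition pB (B : list bool) : R := INR (count1 B) / INR (length B).

Lemma pB_range B : 0 <= pB B <= 1.
Proof.
  unfold pB. pose proof (count10 B). destruct (length B) eqn:E.
  - simpl. unfold Rdiv. rewrite Rinv_0. lra.
  - assert (0 < INR (S n)) by (apply lt_0_INR; lia).
    assert (INR (count1 B) <= INR (S n)) by (apply le_INR; lia).
    pose proof (pos_INR (count1 B)).
    split.
    + unfold Rdiv. apply Rmult_le_pos; auto. left; apply Rinv_0_lt_compat; auto.
    + unfold Rdiv. apply (Rmult_le_reg_r (INR (S n))); auto. rewrite Rmult_assoc, Rinv_l by lra. lra.
Qed.

Definition Bterm (r l : nat) (B : list bool) : R :=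
  INR r + sumR (map (fun u => 3 * Rabs (INR (count1 u) - pB B * INR l)) (blocks l B)).

Lemma allB r n l L (Hr : (0 < r)%nat) (Hl : (0 < l)%nat) (HlL : Nat.divide l L) Bs :
  forall c X P Y, Forall (fun B => length B = L) Bs -> P ++ X ++ Y = A r n ->
  subseq c (concat Bs) -> subseq c X ->
  3 * INR (length c) - INR (length (concat Bs)) - INR (length X) <=
  sumR (map (Bterm r l) Bs) + 2 * INR l * INR (nb X).
Proof.
  induction Bs as [|B Bs IH]; intros c X P Y HF E H1 H2.
  - simpl in H1. apply subseq_nil_r in H1. subst c. simpl. unfold sumR; simpl.
    pose proof (pos_INR (nb X)). pose proof (pos_INR l). pose proof (pos_INR (length X)). nra.
  - pose proof (Forall_inv HF) as HB; pose proof (Forall_inv_tail HF) as HF'; simpl in HB.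
    simpl concat in H1. destruct (subseq_app_inv_r _ _ _ H1) as (c1 & c2 & -> & Hc1 & Hc2).
    destruct (subseq_app_inv_l _ _ _ H2) as (X1 & X2 & -> & HX1 & HX2).
    assert (Hd : Nat.divide l (length B)) by (rewrite HB; auto).
    destruct (blocks_props l B Hl Hd) as (HbF & Hbcat & _).
    rewrite <- Hbcat in Hc1.
    pose proof (perB (pB B) l (blocks l B) c1 X1 (pB_range B) HbF Hc1 HX1) as HP.
    rewrite Hbcat in HP.
    assert (E2 : (P ++ X1) ++ X2 ++ Y = A r n) by (rewrite <- E; rewrite !app_assoc; reflexivity).
    pose proof (IH c2 X2 (P ++ X1) Y HF' E2 Hc2 HX2) as HI.
    assert (E1 : P ++ X1 ++ (X2 ++ Y) = A r n) by (rewrite <- E; rewrite !app_assoc; reflexivity).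
    destruct (A_infix r n P X1 (X2 ++ Y) Hr E1) as [Hi1 Hi2].
    apply le_INR in Hi1. apply le_INR in Hi2. rewrite plus_INR in Hi1, Hi2.
    pose proof (weighted (cf (pB B)) (cf (1 - pB B)) (INR (count1 X1)) (INR (count0 X1)) (INR r)
      (cf_sum _ (pB_range B)) (cf_bounds _ (pB_range B)) (cf_bounds (1 - pB B) ltac:(pose proof (pB_range B); lra))
      (pos_INR _) (pos_INR _) Hi1 Hi2) as Hw.
    pose proof (nb_app X1 X2) as Hnb. apply le_INR in Hnb. rewrite plus_INR in Hnb.
    pose proof (pos_INR l).
    simpl concat. rewrite !length_app, !plus_INR.
    simpl map. unfold sumR at 1; simpl fold_right. change (fold_right Rplus 0 ?x) with (sumR x).
    assert (2*INR l * INR (nb X1) + 2*INR l*INR(nb X2) <= 2*INR l*INR(nb (X1++X2))) by nra.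
    unfold Bterm at 1. lra.
Qed.

Lemma bias_eq w : (0 < length w)%nat -> bias w = 2 * INR (count1 w) / INR (length w) - 1.
Proof.
  intro H. unfold bias. assert (0 < INR (length w)) by (apply lt_0_INR; auto).
  rewrite (INR_len w). rewrite (INR_len w) in H0. field. lra.
Qed.

Lemma u_bound u B t : (0 < length u)%nat -> (0 < length B)%nat -> 0 < t ->
  3 * Rabs (INR (count1 u) - pB B * INR (length u)) <=
  (3 * INR (length u) / 4) * (t + (bias u - bias B) ^ 2 / t).
Proof.
  intros Hu HB Ht. rewrite (bias_eq u Hu), (bias_eq B HB).
  assert (Hl : 0 < INR (length u)) by (apply lt_0_INR; auto).
  assert (HL : 0 < INR (length B)) by (apply lt_0_INR; auto).
  set (x := 2 * INR (count1 u) / INR (length u) - 1 - (2 * INR (count1 B) / INR (length B) - 1)).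
  assert (E : INR (count1 u) - pB B * INR (length u) = INR (length u) * x / 2).
  { unfold x, pB. field. split; lra. }
  rewrite E. unfold Rdiv at 1. rewrite Rabs_mult, Rabs_mult, (Rabs_right (INR (length u))) by lra.
  rewrite (Rabs_right (/2)) by lra.
  assert (Hx : Rabs x <= (t + x ^ 2 / t) / 2).
  { pose proof (Rle_0_sqr (Rabs x - t)). unfold Rsqr in H.
    assert (Rabs x * Rabs x = x ^ 2) by (rewrite <- Rabs_mult; simpl; rewrite Rmult_1_r; apply Rabs_right; nra).
    apply (Rmult_le_reg_r (2 * t)); [lra|]. field_simplify; [|lra]. nra. }
  nra.
Qed.

Definition gB (l : nat) (B : list bool) : R := average (map (fun u => (bias u - bias B) ^ 2) (blocks l B)).

Lemma Bterm_bound r l L B t : (0 < l)%nat -> Nat.divide l L -> (0 < L)%nat -> length B = L -> 0 < t ->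
  Bterm r l B <= INR r + (3 * INR L / 4) * (t + gB l B / t).
Proof.
  intros Hl HlL HL HB Ht. unfold Bterm.
  assert (Hd : Nat.divide l (length B)) by (rewrite HB; auto).
  destruct (blocks_props l B Hl Hd) as (HF & Hcat & Hlen). rewrite Forall_forall in HF.
  apply Rplus_le_compat_l.
  eapply Rle_trans.
  { apply (sumR_le _ (fun u => (3 * INR l / 4) * (t + (bias u - bias B) ^ 2 / t))).
    intros u Hu. rewrite <- (HF u Hu). apply u_bound; auto; [rewrite HF; auto|lia]. }
  set (m := length (blocks l B)).
  assert (Hm : (INR l * INR m = INR L)%R).
  { unfold m. rewrite Hlen, HB, <- mult_INR. f_equal. destruct HlL as [k ->].
    rewrite Nat.div_mul by lia. lia. }
  assert (Hmpos : 0 < INR m).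
  { destruct (Rle_lt_dec (INR m) 0); auto. assert (INR m = 0) by (pose proof (pos_INR m); lra).
    rewrite H in Hm. assert (0 < INR L) by (apply lt_0_INR; auto). lra. }
  rewrite (sumR_ext _ (fun u => (3 * INR l / 4 * t) + ((bias u - bias B) ^ 2) * (3 * INR l / 4 / t))).
  2:{ intros; field. lra. }
  rewrite sumR_plus, sumR_const, sumR_scal.
  unfold gB. rewrite average_def, length_map. fold m.
  rewrite <- Hm. apply Req_le. field. split; lra.
Qed.

Lemma fold_Rmax_ge x0 fs y : fold_right Rmax x0 fs >= y -> x0 >= y \/ exists z, In z fs /\ z >= y.
Proof.
  induction fs as [|a fs IH]; simpl; intro H; auto.
  set (F := fold_right Rmax x0 fs) in *.
  assert (Hc : Rmax a F = a \/ Rmax a F = F) by (unfold Rmax; destruct Rle_dec; auto).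
  destruct Hc as [Hc|Hc]; rewrite Hc in H.
  - right; exists a; auto.
  - destruct (IH H) as [?|(z & Hz & Hz')]; auto. right; exists z; auto.
Qed.

Lemma sublists_subseq {T} (g : nat -> T) l I : In I (sublists l) -> subseq (map g I) (map g l).
Proof.
  revert I; induction l as [|a l IH]; intros I H; simpl in *.
  - destruct H as [<-|[]]. constructor.
  - apply in_app_iff in H. destruct H as [H|H].
    + apply in_map_iff in H. destruct H as (I' & <- & H). simpl. apply ss_take. auto.
    + apply ss_skip. auto.
Qed.

Lemma map_nth_seq_gen (v : list bool) : forall pre,
  map (fun i => nth i (pre ++ v) false) (seq (length pre) (length v)) = v.
Proof.
  induction v as [|x v IH]; intro pre; simpl; auto.
  rewrite app_nth2 by lia. rewrite Nat.sub_diag. simpl. f_equal.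
  specialize (IH (pre ++ [x])). rewrite <- app_assoc in IH. simpl in IH.
  rewrite length_app in IH. simpl in IH. rewrite Nat.add_1_r in IH. exact IH.
Qed.

Lemma map_nth_seq (v : list bool) : map (fun i => nth i v false) (seq 0 (length v)) = v.
Proof. exact (map_nth_seq_gen v []). Qed.

Lemma matching_map a b I J : length I = length J ->
  forallb (fun p => Bool.eqb (nth (fst p) a false) (nth (snd p) b false)) (combine I J) = true ->
  map (fun i => nth i a false) I = map (fun j => nth j b false) J.
Proof.
  revert J; induction I as [|i I IH]; intros [|j J] HL Hf; simpl in *; try discriminate; auto.
  apply andb_true_iff in Hf. destruct Hf as [H1 H2]. apply Bool.eqb_prop in H1. f_equal; auto.
Qed.

Lemma adv_extract v b eps : 0 < eps -> adv v b >= eps / 2 ->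
  exists c, subseq c v /\ subseq c b /\ (0 < length v)%nat /\
    3 * INR (length c) - INR (length v) - INR (length b) >= eps / 2 * INR (length v).
Proof.
  intros He H. unfold adv in H. apply fold_Rmax_ge in H.
  assert (Hgen : forall I J, adv_M v b (I, J) >= eps / 2 ->
     subseq (map (fun i => nth i v false) I) v -> subseq (map (fun i => nth i v false) I) b ->
     exists c, subseq c v /\ subseq c b /\ (0 < length v)%nat /\
       3 * INR (length c) - INR (length v) - INR (length b) >= eps / 2 * INR (length v)).
  { intros I J HM H1 H2. exists (map (fun i => nth i v false) I). unfold adv_M in HM. simpl in HM.
    destruct (length v) eqn:Ev.
    - simpl in HM. unfold Rdiv in HM. rewrite Rinv_0, Rmult_0_r in HM. lra.
    - assert (0 < INR (S n)) by (apply lt_0_INR; lia).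
      repeat split; auto; [lia|]. rewrite length_map.
      apply Rge_le in HM. apply Rle_ge. unfold Rdiv in HM.
      assert (Hi : / INR (S n) * INR (S n) = 1) by (field; lra).
      set (X := 3 * INR (length I) - INR (S n) - INR (length b)) in *.
      assert (0 <= (X * / INR (S n) - eps * / 2) * INR (S n)) by (apply Rmult_le_pos; lra).
      assert (X = X * / INR (S n) * INR (S n)) by (rewrite Rmult_assoc, Hi; ring).
      nra. }
  destruct H as [H|(z & Hz & Hz')].
  - apply (Hgen [] []); auto; apply subseq_nil_l.
  - apply in_map_iff in Hz. destruct Hz as ((I & J) & <- & HIJ).
    unfold matchings in HIJ. apply filter_In in HIJ. destruct HIJ as [HIJ Hb].
    apply in_prod_iff in HIJ. destruct HIJ as [HI HJ]. simpl in HI, HJ.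
    unfold matchingb in Hb. simpl in Hb. apply andb_true_iff in Hb. destruct Hb as [Hl Hf].
    apply Nat.eqb_eq in Hl.
    apply (Hgen I J); auto.
    + pose proof (sublists_subseq (fun i => nth i v false) _ _ HI). rewrite map_nth_seq in H. exact H.
    + rewrite (matching_map v b I J Hl Hf).
      pose proof (sublists_subseq (fun i => nth i b false) _ _ HJ). rewrite map_nth_seq in H. exact H.
Qed.

Lemma len_concat_L (Bs : list (list bool)) L : Forall (fun B => length B = L) Bs ->
  length (concat Bs) = (length Bs * L)%nat.
Proof. induction 1; simpl; auto. rewrite length_app, IHForall, H. lia. Qed.

Lemma nb_A_real r n : (0 < r)%nat -> INR (nb (A r n)) * INR r <= INR n.
Proof.
  intro Hr. rewrite <- mult_INR. apply le_INR. destruct n as [|m].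
  - reflexivity.
  - pose proof (nb_A r Hr m). lia.
Qed.

Lemma core eps r n l L Bs : 0 < eps < 1/20 -> (0 < r)%nat -> (0 < l)%nat -> Nat.divide l L ->
  INR l = eps ^ 2 * INR r -> INR r <= eps ^ 2 * INR L ->
  Forall (fun B => length B = L) Bs -> adv (concat Bs) (A r n) >= eps / 2 ->
  average (map (gB l) Bs) >= eps ^ 3 / 1200.
Proof.
  intros He Hr Hl HlL Hlr HrL HF Hadv.
  destruct (adv_extract _ _ eps ltac:(lra) Hadv) as (c & Hcv & HcA & HN & Hgain).
  rewrite length_A in Hgain.
  pose proof (len_concat_L Bs L HF) as HNL. rewrite HNL in HN, Hgain.
  assert (HL : (0 < L)%nat) by nia. assert (HK : (0 < length Bs)%nat) by nia.
  assert (E0 : [] ++ A r n ++ [] = A r n) by (simpl; apply app_nil_r).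
  pose proof (allB r n l L Hr Hl HlL Bs c (A r n) [] [] HF E0 Hcv HcA) as Hb.
  rewrite HNL, length_A in Hb.
  pose proof (nb_A_real r n Hr) as Hnb.
  pose proof (subseq_length _ _ Hcv) as Hc. rewrite HNL in Hc. apply le_INR in Hc.
  set (t := eps / 10).
  assert (Ht : 0 < t) by (unfold t; lra).
  assert (HS : sumR (map (Bterm r l) Bs) <=
     sumR (map (fun B => INR r + (3 * INR L / 4) * t + gB l B * (3 * INR L / 4 / t)) Bs)).
  { apply sumR_le. intros B HB. rewrite Forall_forall in HF.
    pose proof (Bterm_bound r l L B t Hl HlL HL (HF B HB) Ht). 
    replace (INR r + 3 * INR L / 4 * t + gB l B * (3 * INR L / 4 / t)) with
      (INR r + (3 * INR L / 4) * (t + gB l B / t)) by (field; lra). exact H. }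
  rewrite sumR_plus, sumR_const, sumR_scal in HS.
  set (F := average (map (gB l) Bs)).
  assert (HsF : sumR (map (gB l) Bs) = F * INR (length Bs)).
  { unfold F. rewrite average_def, length_map. field. apply not_0_INR. lia. }
  rewrite HsF in HS. rewrite mult_INR in *.
  set (K := INR (length Bs)) in *. set (Lr := INR L) in *.
  assert (HKp : 1 <= K) by (unfold K; apply (le_INR 1); lia).
  assert (HLp : 0 < Lr) by (unfold Lr; apply lt_0_INR; lia).
  apply Rnot_lt_ge. intro HFs.
  set (nr := INR n) in *. set (rr := INR r) in *. set (nbr := INR (nb (A r n))) in *.
  set (cr := INR (length c)) in *.
  assert (Hnbr : 0 <= nbr) by apply pos_INR.
  assert (Hrr : 0 < rr) by (apply lt_0_INR; lia).
  assert (HKL : 0 < K * Lr) by nra.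
  assert (Hn : nr <= 2 * (K * Lr)) by nra.
  assert (T1 : K * rr <= eps ^ 2 * (K * Lr)) by nra.
  assert (T2 : 2 * INR l * nbr <= 4 * eps ^ 2 * (K * Lr)).
  { rewrite Hlr. assert (nbr * rr <= nr) by lra. nra. }
  assert (T3 : F * K * (3 * Lr / 4 / t) <= (K * Lr) * (eps ^ 2 / 160)).
  { assert (E : F * K * (3 * Lr / 4 / t) = (K * Lr) * (F * (15 / 2) / eps)) by (unfold t; field; lra).
    rewrite E. apply Rmult_le_compat_l; [lra|].
    apply (Rmult_le_reg_r eps); [lra|]. unfold Rdiv. rewrite Rmult_assoc, Rinv_l by lra.
    assert (F * (15/2) <= eps^3 / 1200 * (15/2)) by lra. nra. }
  assert (T4 : K * (3 * Lr / 4 * t) = (K * Lr) * (3 * eps / 40)) by (unfold t; field).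
  assert (Hmain : eps / 2 * (K * Lr) <= (K * Lr) * (5 * eps ^ 2 + eps ^ 2 / 160 + 3 * eps / 40)) by nra.
  assert (Hm2 : eps / 2 <= 5 * eps ^ 2 + eps ^ 2 / 160 + 3 * eps / 40).
  { apply (Rmult_le_reg_r (K * Lr)); [lra|]. lra. }
  nra.
Qed.

Lemma sum_count1 us : sumR (map (fun u => INR (count1 u)) us) = INR (count1 (concat us)).
Proof. induction us; simpl; auto. unfold sumR in *; simpl. rewrite IHus, count1_app, plus_INR. ring. Qed.

Lemma avg_bias_blocks B l : (0 < l)%nat -> Nat.divide l (length B) -> (0 < length B)%nat ->
  average (map bias (blocks l B)) = bias B.
Proof.
  intros Hl Hd HB. destruct (blocks_props l B Hl Hd) as (HF & Hcat & Hlen). rewrite Forall_forall in HF.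
  assert (Hlr : 0 < INR l) by (apply lt_0_INR; auto).
  rewrite average_def, length_map.
  rewrite (sumR_ext _ (fun u => INR (count1 u) * (2 / INR l) + (-1))).
  2:{ intros u Hu. rewrite bias_eq by (rewrite HF; auto). rewrite HF by auto. field. lra. }
  rewrite sumR_plus, sumR_scal, sumR_const, sum_count1, Hcat, (bias_eq B HB).
  destruct Hd as [q Hq]. rewrite Hlen, Hq, Nat.div_mul by lia.
  assert (0 < q)%nat by nia. assert (0 < INR q) by (apply lt_0_INR; auto).
  rewrite mult_INR. field. lra.
Qed.

Lemma var_block {T} (f : T -> R) b us : us <> [] -> average (map f us) = b ->
  average (map (fun u => (f u - b) ^ 2) us) = average (map (fun u => f u ^ 2) us) - b ^ 2.
Proof.
  intros Hne Hb. rewrite average_def in *. rewrite length_map in *.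
  assert (Hm : 0 < INR (length us)) by (apply lt_0_INR; destruct us; [congruence|simpl; lia]).
  rewrite (sumR_ext _ (fun u => (f u ^ 2 + f u * (-2 * b)) + b ^ 2)) by (intros; ring).
  rewrite sumR_plus, sumR_plus, sumR_scal, sumR_const.
  assert (Hs : sumR (map f us) = b * INR (length us)).
  { rewrite <- Hb. field. lra. }
  rewrite Hs. rewrite average_def, length_map. field. lra.
Qed.

Lemma avg_sub {T} (f g : T -> R) xs : average (map f xs) - average (map g xs) = average (map (fun x => f x - g x) xs).
Proof.
  rewrite !average_def, !length_map.
  rewrite (sumR_ext (fun x => f x - g x) (fun x => f x + g x * (-1))) by (intros; ring).
  rewrite sumR_plus, sumR_scal. unfold Rdiv. ring.
Qed.

Lemma chain_levels (l : nat -> nat) c : forall a m, (forall j, (a <= j < a + c)%nat -> (0 < l j)%nat) ->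
  ((0 < c)%nat -> Nat.divide (l a) m) ->
  (forall j, (a <= j)%nat -> (S j < a + c)%nat -> Nat.divide (l (S j)) (l j)) ->
  chain m (map l (seq a c)).
Proof.
  induction c as [|c IH]; intros a m H1 H2 H3; simpl; auto.
  repeat split.
  - apply H1; lia.
  - apply H2; lia.
  - apply IH.
    + intros; apply H1; lia.
    + intros. apply H3; lia.
    + intros; apply H3; lia.
Qed.

Lemma lastl_levels (l : nat -> nat) c : forall a m, lastl m (map l (seq a (S c))) = l (a + c)%nat.
Proof.
  induction c as [|c IH]; intros a m.
  - simpl. now rewrite Nat.add_0_r.
  - change (lastl m (map l (seq a (S (S c))))) with (lastl (l a) (map l (seq (S a) (S c)))).
    rewrite IH. f_equal. lia.
Qed.

Theorem lemma3p3 :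
  exists eps0 : R, 0 < eps0 /\
  forall eps : R, 0 < eps < eps0 ->
  forall (n : nat) (v : list bool) (k : nat) (r l : nat -> nat),
    (0 < n)%nat ->
    (forall j, (1 <= j <= k)%nat -> (0 < r j)%nat) ->
    (forall j, (1 <= j < k)%nat -> (r (S j) < r j)%nat) ->
    (forall j, (1 <= j < k)%nat -> INR (r j) >= INR (r (S j)) / eps ^ 4) ->
    (forall j, (1 <= j <= k)%nat -> INR (l j) = eps ^ 2 * INR (r j)) ->
    Nat.divide (l 1%nat) (length v) ->
    (forall j, (1 <= j < k)%nat -> Nat.divide (l (S j)) (l j)) ->
    (forall j, (1 <= j <= k)%nat -> adv v (A (r j) n) >= eps / 2) ->
    forall i, (1 <= i < k)%nat ->
      VarB l v (S i) >= VarB l v i + eps ^ 3 / 1200.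
Proof.
  exists (1/20). split; [lra|].
  intros eps Heps n v k r l Hn Hr Hdec Hr4 Hl Hdiv1 Hdiv Hadv i Hi.
  assert (Hlpos : forall j, (1 <= j <= k)%nat -> (0 < l j)%nat).
  { intros j Hj. destruct (Nat.eq_0_gt_0_cases (l j)) as [h|h]; auto.
    pose proof (Hl j Hj) as E. rewrite h in E. simpl in E.
    assert (0 < INR (r j)) by (apply lt_0_INR; apply Hr; auto).
    assert (0 < eps ^ 2) by (apply pow_lt; lra). nra. }
  set (ls := levels l i).
  assert (Hch : chain (length v) ls).
  { unfold ls, levels. apply chain_levels.
    - intros; apply Hlpos; lia.
    - intros; auto.
    - intros; apply Hdiv; lia. }
  destruct i as [|i']; [lia|].
  assert (Hlast : lastl (length v) ls = l (S i')).
  { unfold ls, levels. rewrite lastl_levels. f_equal. }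
  destruct (blocksN_props ls v Hch) as (_ & HF & Hcat). rewrite Hlast in HF.
  set (i := S i') in *. set (Bs := blocksN ls v) in *.
  set (ll := l (S i)). set (L := l i).
  assert (Hll : (0 < ll)%nat) by (apply Hlpos; lia).
  assert (HL : (0 < L)%nat) by (apply Hlpos; lia).
  assert (HlL : Nat.divide ll L) by (apply Hdiv; lia).
  assert (Hlev : levels l (S i) = ls ++ [ll]).
  { unfold levels, ls. rewrite seq_S, map_app. reflexivity. }
  assert (HV : VarB l v (S i) - VarB l v i = average (map (gB ll) Bs)).
  { unfold VarB. rewrite Hlev, !Exp_app. fold ls. rewrite !(Exp_flat ls v) by auto. fold Bs.
    rewrite Forall_forall in HF.
    assert (Hab : forall B, In B Bs -> average (map bias (blocks ll B)) = bias B).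
    { intros B HB. apply avg_bias_blocks; auto; rewrite HF; auto. }
    rewrite (map_ext_in (fun x => average (map bias (blocks ll x))) bias) by auto.
    assert (E : average (map (fun x => average (map (fun w => bias w ^ 2) (blocks ll x))) Bs)
                - average (map (fun w => bias w ^ 2) Bs) = average (map (gB ll) Bs)).
    { rewrite avg_sub. f_equal. apply map_ext_in. intros B HB. unfold gB.
      rewrite (var_block bias (bias B)); auto.
      destruct (blocks_props ll B Hll ltac:(rewrite HF; auto)) as (_ & _ & Hlen).
      intro Hnil.
      assert (Hpos: (0 < length B / ll)%nat).
      { rewrite (HF B HB). apply Nat.div_str_pos. pose proof (Nat.divide_pos_le ll L HL HlL). lia. }
      rewrite <- Hlen, Hnil in Hpos. simpl in Hpos. lia. }
    lra. }
  assert (Hcore : average (map (gB ll) Bs) >= eps ^ 3 / 1200).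
  { apply (core eps (r (S i)) n ll L Bs Heps); auto.
    - apply Hr; lia.
    - apply Hl; lia.
    - assert (E1 : INR L = eps ^ 2 * INR (r i)) by (apply Hl; lia).
      pose proof (Hr4 i ltac:(lia)) as E2.
      assert (Hp4 : 0 < eps ^ 4) by (apply pow_lt; lra).
      rewrite E1. apply Rge_le in E2.
      apply (Rmult_le_compat_l (eps ^ 4)) in E2; [|lra].
      unfold Rdiv in E2. rewrite <- Rmult_assoc, (Rmult_comm (eps ^ 4)), Rmult_assoc, Rinv_r in E2 by lra.
      replace (eps ^ 2 * (eps ^ 2 * INR (r i))) with (eps ^ 4 * INR (r i)) by ring. lra.
    - rewrite Hcat. apply Hadv; lia. }
  lra.
Qed.
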